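(* Consider the nonlinear kinetic equation with longitudinal scattering described in the context, with $d\sigma\ge2$ and $g>0$, and a maximally extended local solution on $[0,z_* )$ satisfying the standing assumptions. Define $$F(z)=V_x(0)+2V_{xp}(0)z+d\sigma(H(0)-\bar H)z^2+\frac{d\sigma R}{3}z^3,\qquad z_0=\frac{\bar H-H(0)+\sqrt{(H(0)-\bar H)^2-2RV_{xp}(0)/(d\sigma)}}{R}.$$ If $F(z_0)\le0$ and either (i) $V_{xp}(0)<0$, or (ii) $V_{xp}(0)>0$ and $H(0)<\bar H-\sqrt{2RV_{xp}(0)/(d\sigma)}$, then the solution develops a singularity at a finite time: $z_*\le z_0$.
   Context: Setting. Let $d\ge1$, $\sigma>0$, $g\in\mathbb R$. Let $\Phi(w,\mathbf p)\ge0$, $(w,\mathbf p)\in\mathbb R\times\mathbb R^d$, be a power spectrum density, rapidly decaying, with $\Phi(w,\mathbf p)=\Phi(-w,\mathbf p)=\Phi(w,-\mathbf p)=\Phi(-w,-\mathbf p)$. The longitudinal scattering operator $\mathcal L$ is either the linear Boltzmann operator $\mathcal L W(\mathbf p)=2\pi\int\Phi(0,\mathbf q-\mathbf p)[W(\mathbf q)-W(\mathbf p)]d\mathbf q$, in which case $R:=2\pi\int\Phi(0,\mathbf q)|\mathbf q|^2d\mathbf q$, or the Fokker–Planck operator $\mathcal LW=\nabla_{\mathbf p}\cdot(\mathbf D\nabla_{\mathbf p}W)$ with $\mathbf D=\pi\int\Phi(0,\mathbf q)\mathbf q\otimes\mathbf q\,d\mathbf q$, in which case $R:=2\,\mathrm{trace}(\mathbf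 D)$. The kinetic equation is $\partial_zW+\mathbf p\cdot\nabla_{\mathbf x}W+\nabla_{\mathbf x}U\cdot\nabla_{\mathbf p}W=\mathcal LW$ for $W(z,\mathbf x,\mathbf p)\ge0$, $\mathbf x,\mathbf p\in\mathbb R^d$, with $\rho(z,\mathbf x)=\int W\,d\mathbf p$ and $U=g\rho^{\sigma}$, understood weakly: $\partial_z\int\Theta W-\int\mathbf p\cdot\nabla_{\mathbf x}\Theta\,W-\int\nabla_{\mathbf x}U\cdot\nabla_{\mathbf p}\Theta\,W-\int(\mathcal L^*\Theta)W=0$ for smooth rapidly decaying $\Theta$. Normalization $\int W\,d\mathbf x\,d\mathbf p=1$. Notation (all integrals over $\mathbb R^{2d}$ against $W(z,\cdot)$): $\bar{\mathbf x}=\int\mathbf xW$, $\bar{\mathbf p}=\int\mathbf pW$, $V_x=\int|\mathbf x-\bar{\mathbf x}|^2W$, $V_p=\int|\mathbf p-\bar{\mathbf p}|^2W$, $V_{xp}=\int(\mathbf x-\bar{\mathbf x})\cdot(\mathbf p-\bar{\mathbf p})W$, Hamiltonian $H=\frac12\int|\mathbf p|^2W-\frac{g}{\sigma+1}\int\rho^{\sigma+1}d\mathbf x$, mean Hamiltonian $\bar H=\frac12|\bar{\mathbf p}|^2$ (constant in $z$ in this setting). Standing assumptions: a local solution exists in the space of nonnegative measures with square-integrable density, finite Dirichlet form $-\int W\mathcal LW$, finite positive variances $V_x,V_p$ and finite Hamiltonian; $[0,z_* )$ is the maximal interval of existence of this solution ($z_*<\infty$ means the solution develops a finite-time singularity);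 on $[0,z_* )$ the weak formulation may be applied with the test functions $x_i,p_i,|\mathbf x|^2,\mathbf x\cdot\mathbf p,|\mathbf p|^2$ (so the energy law and variance identity hold); and $W$ has mixed-state (Wigner measure) structure, so $V_{xp}^2\le V_xV_p$. *)

(* Defs.v *)
From mathcomp Require Import all_boot all_order all_algebra.
From mathcomp Require Import all_classical all_reals all_analysis.
Set Implicit Arguments. Unset Strict Implicit. Unset Printing Implicit Defensive.
Import Order.TTheory GRing.Theory Num.Theory.
Import numFieldNormedType.Exports.
Local Open Scope classical_set_scope.
Local Open Scope ring_scope.

(* Real-valued integral over R^n of f : 'rV_n -> R, as the iterated Lebesgue
   integral over the coordinates (Fubini: equals the Lebesgue integral on R^n
   for integrable Borel f). *)
Fixpoint rint {R : realType} (n : nat) : ('rV[R]_n -> R) -> R :=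
  match n return ('rV[R]_n -> R) -> R with
  | 0 => fun f => f 0
  | n'.+1 => fun f =>
      Rintegral (@lebesgue_measure R) setT
        (fun t : R => rint (fun v : 'rV[R]_n' => f (row_mx (t%:M) v)))
  end.

Fixpoint eint {R : realType} (n : nat) : ('rV[R]_n -> \bar R) -> \bar R :=
  match n return ('rV[R]_n -> \bar R) -> \bar R with
  | 0 => fun f => f 0
  | n'.+1 => fun f =>
      (\int[@lebesgue_measure R]_(t in setT)
         eint (fun v : 'rV[R]_n' => f (row_mx (t%:M) v)))%E
  end.

Definition rfin {R : realType} (n : nat) (f : 'rV[R]_n -> R) : Prop :=
  (eint (fun v => (`|f v|)%:E) < +oo)%E.

Definition borel_fun {T : topologicalType} {R : realType} (f : T -> R) : Prop :=
  forall B : set R, measurable B -> <<s open >> (f @^-1` B).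

Definition pint {R : realType} (d : nat) (f : 'rV[R]_d -> 'rV[R]_d -> R) : R :=
  rint (fun x => rint (fun p => f x p)).
Definition pfin {R : realType} (d : nat) (f : 'rV[R]_d -> 'rV[R]_d -> R) : Prop :=
  (eint (fun x => eint (fun p => (`|f x p|)%:E)) < +oo)%E.

Definition dotv {R : realType} (d : nat) (u v : 'rV[R]_d) : R :=
  \sum_(i < d) u 0 i * v 0 i.
Definition sqn {R : realType} (d : nat) (v : 'rV[R]_d) : R := dotv v v.
Definition enorm {R : realType} (d : nat) (v : 'rV[R]_d) : R := Num.sqrt (sqn v).

Definition power_spectrum {R : realType} (d : nat) (Phi : R -> 'rV[R]_d -> R) :=
  [/\ borel_fun (fun wp : R * 'rV[R]_d => Phi wp.1 wp.2),
      (forall w p, 0 <= Phi w p),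
      (forall w p, Phi w p = Phi (- w) p /\ Phi w p = Phi w (- p)
                   /\ Phi w p = Phi (- w) (- p)) &
      (forall k : nat, exists C : R, forall w p,
          (1 + `|w| + enorm p) ^+ k * Phi w p <= C)].

Inductive scattering := LinBoltzmann | FokkerPlanck.

Definition Dmat {R : realType} (d : nat) (Phi : R -> 'rV[R]_d -> R) : 'M[R]_d :=
  \matrix_(i, j) (pi * rint (fun q => Phi 0 q * q 0 i * q 0 j)).

Definition Rconst {R : realType} (d : nat) (L : scattering)
    (Phi : R -> 'rV[R]_d -> R) : R :=
  match L with
  | LinBoltzmann => 2 * pi * rint (fun q => Phi 0 q * sqn q)
  | FokkerPlanck => 2 * \tr (Dmat Phi)
  end.

Section Moments.
Variables (R : realType) (d : nat).
Implicit Types (W : R -> 'rV[R]_d -> 'rV[R]_d -> R) (z : R).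

Definition rho W z (x : 'rV[R]_d) : R := rint (W z x).
Definition xbar W z : 'rV[R]_d := \row_i pint (fun x p => x 0 i * W z x p).
Definition pbar W z : 'rV[R]_d := \row_i pint (fun x p => p 0 i * W z x p).
Definition Vx W z : R := pint (fun x p => sqn (x - xbar W z) * W z x p).
Definition Vp W z : R := pint (fun x p => sqn (p - pbar W z) * W z x p).
Definition Vxp W z : R :=
  pint (fun x p => dotv (x - xbar W z) (p - pbar W z) * W z x p).
Definition potint (sigma : R) W z : R := rint (fun x => rho W z x `^ (sigma + 1)).
Definition Ham (sigma g : R) W z : R :=
  2^-1 * pint (fun x p => sqn p * W z x p) - g / (sigma + 1) * potint sigma W z.
Definition Hbar W z : R := 2^-1 * sqn (pbar W z).

Definition mom_x W z (i : 'I_d) : R := pint (fun x p => x 0 i * W z x p).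
Definition mom_p W z (i : 'I_d) : R := pint (fun x p => p 0 i * W z x p).
Definition mom_xx W z : R := pint (fun x p => sqn x * W z x p).
Definition mom_xp W z : R := pint (fun x p => dotv x p * W z x p).
Definition mom_pp W z : R := pint (fun x p => sqn p * W z x p).
End Moments.

Definition exist_itv {R : realType} (zs : \bar R) : set R :=
  [set z | 0 <= z /\ (z%:E < zs)%E].

Definition ode_law {R : realType} (zs : \bar R) (f f' : R -> R) : Prop :=
  {within exist_itv zs, continuous f} /\
  (forall z, 0 < z -> (z%:E < zs)%E -> is_derive z 1 f (f' z)).

Definition standing_assumptions {R : realType} (d : nat) (sigma g Rc : R)
    (W : R -> 'rV[R]_d -> 'rV[R]_d -> R) (zs : \bar R) : Prop :=
  (0 < zs)%E /\
  (forall z, exist_itv zs z ->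
     [/\ borel_fun (fun xp : 'rV[R]_d * 'rV[R]_d => W z xp.1 xp.2)
           /\ (forall x p, 0 <= W z x p),
         (pfin (W z) /\ pint (W z) = 1)
           /\ pfin (fun x p => W z x p ^+ 2),
         [/\ pfin (fun x p => sqn x * W z x p),
             pfin (fun x p => sqn p * W z x p),
             0 < Vx W z & 0 < Vp W z],
         rfin (fun x => rho W z x `^ (sigma + 1))
       & Vxp W z ^+ 2 <= Vx W z * Vp W z])                     (* mixed-state structure *)
  /\
  (* weak formulation with test functions x_i, p_i, |x|^2, x.p, |p|^2,
     after evaluating L^* on them and integrating the force terms by parts:
     moment laws, variance identity and energy law *)
  [/\ (forall i, ode_law zs (fun z => mom_x W z i) (fun z => mom_p W z i)),
      (forall i, ode_law zs (fun z => mom_p W z i) (fun _ => 0)),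
      ode_law zs (mom_xx W) (fun z => 2 * mom_xp W z),
      ode_law zs (mom_xp W)
        (fun z => mom_pp W z - g * (d%:R * sigma) / (sigma + 1) * potint sigma W z)
    & ode_law zs (Ham sigma g W) (fun _ => Rc / 2)].

(* Main.v *)
Require Import Defs.
From mathcomp Require Import all_boot all_order all_algebra.
From mathcomp Require Import all_classical all_reals all_analysis.
From mathcomp Require Import measurable_realfun.
From mathcomp Require Import ring lra.
Import Order.TTheory GRing.Theory Num.Theory.
Import numFieldNormedType.Exports.
Local Open Scope classical_set_scope.
Local Open Scope ring_scope.
Set Implicit Arguments. Unset Strict Implicit. Unset Printing Implicit Defensive.
Section J.
Variable R : realType.
Local Notation leb := (@lebesgue_measure R).

Fixpoint jmB (Z : Type) (B : forall d (T : measurableType d), (T -> Z) -> Prop) (n : nat)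
  : forall d (T : measurableType d), (T -> 'rV[R]_n -> Z) -> Prop :=
 match n return forall d (T : measurableType d), (T -> 'rV[R]_n -> Z) -> Prop with
 | 0 => fun d T f => B d T (fun s => f s 0)
 | n'.+1 => fun d T f => @jmB Z B n' _ (T * R)%type (fun st v => f st.1 (row_mx (st.2%:M) v))
 end.

Definition jmR n d (T : measurableType d) (f : T -> 'rV[R]_n -> R) :=
  @jmB R (fun d T g => measurable_fun setT g) n d T f.
Definition jmE n d (T : measurableType d) (f : T -> 'rV[R]_n -> \bar R) :=
  @jmB (\bar R) (fun d T g => measurable_fun setT g) n d T f.

Lemma jmB_map (Z1 Z2 : Type) (B1 : forall d (T : measurableType d), (T -> Z1) -> Prop)
  (B2 : forall d (T : measurableType d), (T -> Z2) -> Prop) (Phi : Z1 -> Z2) :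
  (forall d (T : measurableType d) g, B1 d T g -> B2 d T (fun s => Phi (g s))) ->
  forall n d (T : measurableType d) f, @jmB Z1 B1 n d T f ->
    @jmB Z2 B2 n d T (fun s v => Phi (f s v)).
Proof.
move=> HB; elim=> [|n IH] d T f /=; first exact: HB.
exact: IH.
Qed.

Lemma eint_ge0 n : forall (w : 'rV[R]_n -> \bar R), (forall v, 0 <= w v)%E -> (0 <= eint w)%E.
Proof.
elim: n => [|n IH] w w0 /=; first exact: w0.
apply: integral_ge0 => t _; apply: IH => v; exact: w0.
Qed.

Lemma eint_meas n : forall d (T : measurableType d) (w : T -> 'rV[R]_n -> \bar R),
  jmE w -> (forall s v, 0 <= w s v)%E -> measurable_fun setT (fun s => eint (w s)).
Proof.
elim: n => [|n IH] d T w jw w0 /=; first exact: jw.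
have := IH _ _ _ jw (fun st v => w0 _ _).
move=> /(@measurable_fun_fubini_tonelli_F _ _ _ _ _ leb) H.
apply: H => st; apply: eint_ge0 => v; exact: w0.
Qed.


Lemma jm_intro (Z : Type) (B : forall d (T : measurableType d), (T -> Z) -> Prop) n :
 forall d (T : measurableType d) (f : T -> 'rV[R]_n -> Z),
 (forall d' (T' : measurableType d') (s0 : T' -> T) (X : T' -> 'rV[R]_n),
    measurable_fun setT s0 -> (forall i, measurable_fun setT (fun s => X s 0 i)) ->
    B d' T' (fun s => f (s0 s) (X s))) -> @jmB Z B n d T f.
Proof.
elim: n => [|n IH] d T f H /=.
  apply: (H _ _ id (fun _ => 0)); first exact: measurable_id.
  by move=> i; exact: measurable_cst.
apply: IH => d' T' s0 X ms0 mX.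
apply: (H _ _ (fun s => (s0 s).1) (fun s => row_mx ((s0 s).2)%:M (X s))).
  exact: (measurableT_comp measurable_fst ms0).
move=> i; rewrite -[i](@splitK 1 n); case: (@fintype.split 1 n i) => [j|k] /=.
  have -> : (fun s => row_mx (s0 s).2%:M (X s) 0 (lshift n j)) = (fun s => (s0 s).2).
    apply/funext => s; rewrite row_mxEl mxE.
    by rewrite (ord1 j) eqxx mulr1n.
  exact: (measurableT_comp measurable_snd ms0).
have -> : (fun s => row_mx (s0 s).2%:M (X s) 0 (rshift 1 k)) = (fun s => X s 0 k).
  by apply/funext => s; rewrite row_mxEr.
exact: mX.
Qed.

Lemma param_Rint_meas d (T : measurableType d) (h : T * R -> R) :
  measurable_fun setT h ->
  measurable_fun setT (fun s => fine (\int[leb]_(t in setT) (h (s, t))%:E)%E).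
Proof.
move=> mh.
apply: measurableT_comp; first exact: fine_measurable.
have -> : (fun s => \int[leb]_(t in setT) (h (s, t))%:E)%E =
   (fun s => \int[leb]_(t in setT) ((EFin \o h)^\+ (s, t)) -
             \int[leb]_(t in setT) ((EFin \o h)^\- (s, t)))%E.
  apply/funext => s; rewrite integralE; congr (_ - _)%E; apply: eq_integral => t _;
  by rewrite !(funeposE, funenegE).
have mh' : measurable_fun setT (EFin \o h) by exact/measurable_EFinP.
apply: emeasurable_funB.
  apply: (@measurable_fun_fubini_tonelli_F _ _ _ _ _ leb).
    exact: measurable_funepos.
  by move=> x; exact: funepos_ge0.
apply: (@measurable_fun_fubini_tonelli_F _ _ _ _ _ leb).
  exact: measurable_funeneg.
by move=> x; exact: funeneg_ge0.
Qed.

Lemma rint_meas n : forall d (T : measurableType d) (u : T -> 'rV[R]_n -> R),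
  jmR u -> measurable_fun setT (fun s => rint (u s)).
Proof.
elim: n => [|n IH] d T u ju /=; first exact: ju.
exact: (param_Rint_meas (IH _ _ _ ju)).
Qed.

Lemma rint_abs_le n : forall d (T : measurableType d) (u : T -> 'rV[R]_n -> R)
  (w : T -> 'rV[R]_n -> \bar R),
  jmR u -> jmE w -> (forall s v, 0 <= w s v)%E ->
  (forall s v, (`|u s v|%:E <= w s v)%E) ->
  forall s, (`|rint (u s)|%:E <= eint (w s))%E.
Proof.
elim: n => [|n IH] d T u w ju jw w0 uw s /=; first exact: uw.
rewrite /Rintegral; set I := (X in fine X).
have mh := @rint_meas n _ (T * R)%type (fun st v => u st.1 (row_mx st.2%:M v)) ju.
have me := @eint_meas n _ (T * R)%type (fun st v => w st.1 (row_mx st.2%:M v)) jw (fun st v => w0 _ _).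
have [fI|nfI] := boolP (I \is a fin_num); last first.
    have -> : fine I = 0.
    by move: nfI; case: (I) => //.
  rewrite normr0; apply: integral_ge0 => t _; apply: eint_ge0 => v; exact: w0.
rewrite -abse_EFin fineK //.
apply: le_trans.
  apply: (le_abse_integral leb measurableT).
  apply/measurable_EFinP.
  exact: (measurable_fun_pair2 s mh).
apply: ge0_le_integral => //.
- apply: measurableT_comp => //; apply/measurable_EFinP.
  exact: (measurable_fun_pair2 s mh).
- exact: (measurable_fun_pair2 s me).
move=> t _ /=.
exact: (IH _ _ _ _ ju jw (fun st v => w0 _ _) (fun st v => uw _ _) (s, t)).
Qed.

Lemma eint_add n : forall d (T : measurableType d) (f g : T -> 'rV[R]_n -> \bar R),
  jmE f -> jmE g -> (forall s v, 0 <= f s v)%E -> (forall s v, 0 <= g s v)%E ->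
  forall s, eint (fun v => f s v + g s v)%E = (eint (f s) + eint (g s))%E.
Proof.
elim: n => [|n IH] d T f g jf jg f0 g0 s //=.
rewrite -ge0_integralD //.
- apply: eq_integral => t _.
  exact: (IH _ _ _ _ jf jg (fun st v => f0 _ _) (fun st v => g0 _ _) (s, t)).
- by move=> t _; apply: eint_ge0 => v; exact: f0.
- exact: (measurable_fun_pair2 s (@eint_meas n _ (T * R)%type (fun st v => f st.1 (row_mx st.2%:M v)) jf (fun st v => f0 _ _))).
- by move=> t _; apply: eint_ge0 => v; exact: g0.
- exact: (measurable_fun_pair2 s (@eint_meas n _ (T * R)%type (fun st v => g st.1 (row_mx st.2%:M v)) jg (fun st v => g0 _ _))).
Qed.


Lemma Rint_sum (I : finType) (a : I -> R) (g : I -> R -> R) :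
  (forall i, leb.-integrable setT (EFin \o g i)) ->
  Rintegral leb setT (fun t => \sum_i a i * g i t) =
  \sum_i a i * Rintegral leb setT (g i).
Proof.
move=> ig.
rewrite /Rintegral.
have -> : (\int[leb]_(t in setT) (\sum_i a i * g i t)%:E)%E =
          (\sum_i \int[leb]_(t in setT) ((a i)%:E * (g i t)%:E))%E.
  rewrite -integral_sum //; last first.
    move=> i; apply: integrableZl => //; exact: ig.
  by apply: eq_integral => t _; rewrite -sumEFin; apply: eq_bigr => i _; rewrite EFinM.
have -> : (\sum_i \int[leb]_(t in setT) ((a i)%:E * (g i t)%:E))%E =
          ((\sum_i a i * fine (\int[leb]_(t in setT) (g i t)%:E))%:E)%E.
  rewrite -sumEFin; apply: eq_bigr => i _.
  have fI := integrable_fin_num measurableT (ig i).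
  rewrite integralZl //; last exact: ig.
  by rewrite -[X in (_ * X)%E = _](fineK fI).
by [].
Qed.

Lemma rint_lin n : forall d (T : measurableType d) (I : finType) (a : I -> R)
  (u : I -> T -> 'rV[R]_n -> R) (w : I -> T -> 'rV[R]_n -> \bar R) (U : T -> 'rV[R]_n -> R),
  (forall i, jmR (u i)) -> (forall i, jmE (w i)) -> jmR U ->
  (forall i s v, 0 <= w i s v)%E -> (forall i s v, `|u i s v|%:E <= w i s v)%E ->
  (forall s v, (forall i, w i s v < +oo)%E -> U s v = \sum_i a i * u i s v) ->
  forall s, (forall i, eint (w i s) < +oo)%E -> rint (U s) = \sum_i a i * rint (u i s).
Proof.
elim: n => [|n IH] d T I a u w U ju jw jU w0 uw HU s ws /=.
  exact: HU s 0 ws.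
pose u' i := fun (st : T * R) v => u i st.1 (row_mx st.2%:M v).
pose w' i := fun (st : T * R) v => w i st.1 (row_mx st.2%:M v).
pose U' := fun (st : T * R) v => U st.1 (row_mx st.2%:M v).
have mg i : measurable_fun setT (fun t => rint (u' i (s, t))).
  exact: (measurable_fun_pair2 s (@rint_meas n _ (T * R)%type (u' i) (ju i))).
have mh : measurable_fun setT (fun t => rint (U' (s, t))).
  exact: (measurable_fun_pair2 s (@rint_meas n _ (T * R)%type U' jU)).
have me i : measurable_fun setT (fun t => eint (w' i (s, t))).
  exact: (measurable_fun_pair2 s (@eint_meas n _ (T * R)%type (w' i) (jw i) (fun st v => w0 i _ _))).
have e0 i t : (0 <= eint (w' i (s, t)))%E.
  by apply: eint_ge0 => v; exact: w0.
have ig i : leb.-integrable setT (EFin \o (fun t => rint (u' i (s, t)))).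
  apply/integrableP; split; first by apply/measurable_EFinP; exact: mg.
  apply: (@le_lt_trans _ _ (\int[leb]_(t in setT) eint (w' i (s, t)))%E); last exact: ws.
  apply: ge0_le_integral => //.
  - apply: measurableT_comp => //; apply/measurable_EFinP; exact: mg.
  - exact: me.
  - move=> t _ /=.
    exact: (@rint_abs_le n _ (T * R)%type (u' i) (w' i) (ju i) (jw i) (fun st v => w0 i _ _) (fun st v => uw i _ _) (s, t)).
have ae_fin : {ae leb, forall t, forall i, (eint (w' i (s, t)) < +oo)%E}.
  apply: filter_forall => i.
  have ie : leb.-integrable setT (fun t => eint (w' i (s, t))).
    apply/integrableP; split; first exact: me.
    under eq_integral do rewrite gee0_abs //.
    exact: ws.
  apply: filterS (integrable_ae measurableT ie) => t /(_ Logic.I) Ht.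
  by rewrite -ge0_fin_numE.
have -> : Rintegral leb setT (fun t => rint (U' (s, t))) =
          Rintegral leb setT (fun t => \sum_i a i * rint (u' i (s, t))).
  rewrite /Rintegral; congr fine; apply: ae_eq_integral => //.
  - apply/measurable_EFinP; exact: mh.
  - apply/measurable_EFinP; apply: measurable_sum => i.
    exact: measurable_funM (measurable_cst _) (mg i).
  have FF : Filter (nbhs (almost_everywhere leb)) by exact: ae_filter_ringOfSetsType.
  rewrite /ae_eq; near=> t => _; congr EFin.
  apply: (IH _ (T * R)%type I a u' w' U' ju jw jU (fun i st v => w0 i _ _)
           (fun i st v => uw i _ _) (fun st v Hv => HU _ _ Hv) (s, t)).
  near: t; exact: ae_fin.
exact: Rint_sum.
Unshelve. all: by end_near.
Qed.

Lemma open_box d (O : set ('rV[R]_d * 'rV[R]_d)) y : open O -> O y ->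
  exists2 e : R, 0 < e & forall z : ('rV[R]_d * 'rV[R]_d), (forall j, `|z.1 0 j - y.1 0 j| < e) ->
     (forall j, `|z.2 0 j - y.2 0 j| < e) -> O z.
Proof.
move=> oO Oy.
have : nbhs y O by rewrite openE in oO; exact: oO.
move=> /nbhs_ballP[e e0 He]; exists e => // z H1 H2; apply: He.
split; split => // i j; rewrite (ord1 i) /ball /= distrC; [exact: H1|exact: H2].
Qed.

Lemma coord_ball_meas d' (T : measurableType d') (g : T -> R) (c r : R) :
  measurable_fun setT g -> measurable [set s | `|g s - c| < r].
Proof.
move=> mg.
have -> : [set s | `|g s - c| < r] = setT `&` g @^-1` `]c - r, c + r[.
  apply/seteqP; split => s /=.
    by rewrite ltr_distl => H; split => //; rewrite /= in_itv /=.
  by move=> [_]; rewrite /= in_itv /= ltr_distl.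
exact: mg.
Qed.

Lemma preimage_open_meas d d' (T : measurableType d') (X P : T -> 'rV[R]_d) :
  (forall i, measurable_fun setT (fun s => X s 0 i)) ->
  (forall i, measurable_fun setT (fun s => P s 0 i)) ->
  forall O : set ('rV[R]_d * 'rV[R]_d), open O -> measurable [set s | O (X s, P s)].
Proof.
move=> mX mP O oO.
pose K := ('rV[rat]_d * 'rV[rat]_d * rat)%type.
pose box (k : K) := [set z : 'rV[R]_d * 'rV[R]_d |
   (forall j, `|z.1 0 j - ratr (k.1.1 0 j)| < ratr k.2) /\
   (forall j, `|z.2 0 j - ratr (k.1.2 0 j)| < ratr k.2)].
have -> : [set s | O (X s, P s)] = \bigcup_(k : K) [set s | box k `<=` O /\ box k (X s, P s)].
  apply/seteqP; split; last by move=> s [k _ [sub bk]]; exact: sub _ bk.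
  move=> s /= Os.
  have [e e0 He] := open_box oO Os.
  have [r] : exists r : rat, ratr r \in `]0, e / 2[.
    by apply: rat_in_itvoo; rewrite divr_gt0.
  rewrite in_itv /= => /andP[r0 re].
  have /choice [qx Hqx] : forall j : 'I_d, exists q : rat,
      ratr q \in `](X s 0 j) - ratr r, (X s 0 j) + ratr r[.
    move=> j; apply: rat_in_itvoo.
    by rewrite ltrBlDr -addrA ltrDl addr_gt0.
  have /choice [qp Hqp] : forall j : 'I_d, exists q : rat,
      ratr q \in `](P s 0 j) - ratr r, (P s 0 j) + ratr r[.
    move=> j; apply: rat_in_itvoo.
    by rewrite ltrBlDr -addrA ltrDl addr_gt0.
  exists (\row_j qx j, \row_j qp j, r) => //; split.
  - move=> z [Hz1 Hz2]; apply: He => j.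
    + move: (Hz1 j) (Hqx j); rewrite !mxE /= in_itv /= -ltr_distl => H1 H2.
      rewrite (le_lt_trans (ler_distD (ratr (qx j)) _ _)) //.
      apply: (lt_le_trans (ltrD H1 H2)).
      by rewrite -mulr2n -mulr_natr -ler_pdivlMr // ltW.
    + move: (Hz2 j) (Hqp j); rewrite !mxE /= in_itv /= -ltr_distl => H1 H2.
      rewrite (le_lt_trans (ler_distD (ratr (qp j)) _ _)) //.
      apply: (lt_le_trans (ltrD H1 H2)).
      by rewrite -mulr2n -mulr_natr -ler_pdivlMr // ltW.
  - split => j /=; rewrite mxE distrC ltr_distl.
    + by move: (Hqx j); rewrite in_itv /=.
    + by move: (Hqp j); rewrite in_itv /=.
apply: countable_bigcupT_measurable; first exact: countableP.
move=> k; have [sub|nsub] := pselect (box k `<=` O); last first.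
  have -> : [set s | box k `<=` O /\ box k (X s, P s)] = set0.
    by apply/seteqP; split => s // [].
  exact: measurable0.
have -> : [set s | box k `<=` O /\ box k (X s, P s)] =
   \bigcap_(j in setT) ([set s | `|X s 0 j - ratr (k.1.1 0 j)| < ratr k.2] `&`
                        [set s | `|P s 0 j - ratr (k.1.2 0 j)| < ratr k.2]).
  apply/seteqP; split => s /=.
    by move=> [_ [H1 H2]] j _; split; [exact: H1|exact: H2].
  move=> H; split => //; split => j; have [] := H j Logic.I => //.
apply: fin_bigcap_measurable; first exact: finite_finset.
move=> j _; apply: measurableI; exact: coord_ball_meas.
Qed.

Definition Bm d (f : 'rV[R]_d -> 'rV[R]_d -> R) :=
  forall d' (T : measurableType d') (X P : T -> 'rV[R]_d),
  (forall i, measurable_fun setT (fun s => X s 0 i)) ->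
  (forall i, measurable_fun setT (fun s => P s 0 i)) ->
  measurable_fun setT (fun s => f (X s) (P s)).

Lemma borel_Bm d (f : 'rV[R]_d -> 'rV[R]_d -> R) :
  borel_fun (fun xp : 'rV[R]_d * 'rV[R]_d => f xp.1 xp.2) -> Bm f.
Proof.
move=> bf d' T X P mX mP _ B mB; rewrite setTI.
pose C := [set A : set ('rV[R]_d * 'rV[R]_d) | measurable [set s | A (X s, P s)]].
have sC : sigma_algebra setT C.
  split.
  - rewrite /C /=; have -> : [set s : T | @set0 ('rV[R]_d * 'rV[R]_d) (X s, P s)] = set0 by [].
    exact: measurable0.
  - move=> A; rewrite /C /= => mA.
    have -> : [set s | (setT `\` A) (X s, P s)] = setT `\` [set s | A (X s, P s)].
      by apply/seteqP; split => s /=.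
    exact: measurableD.
  - move=> A mA; rewrite /C /=.
    have -> : [set s | (\bigcup_k A k) (X s, P s)] = \bigcup_k [set s | A k (X s, P s)].
      by apply/seteqP; split => s /=.
    exact: bigcupT_measurable.
have := @smallest_sub _ (sigma_algebra setT) open C sC.
move=> /(_ (fun O oO => preimage_open_meas mX mP oO)) H.
exact: (H _ (bf B mB)).
Qed.

Lemma Bm_inner d (g : 'rV[R]_d -> 'rV[R]_d -> R) (x : 'rV[R]_d) :
  Bm g -> jmR (fun (_ : R) p => g x p).
Proof.
move=> bg; apply: jm_intro => d' T' s0 P' _ mP.
apply: (bg _ _ (fun _ => x) P') => // i; exact: measurable_cst.
Qed.

Lemma Bm_innerE d (g : 'rV[R]_d -> 'rV[R]_d -> R) (x : 'rV[R]_d) :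
  Bm g -> jmE (fun (_ : R) p => (g x p)%:E).
Proof.
move=> bg; apply: jm_intro => d' T' s0 P' _ mP.
apply/measurable_EFinP.
apply: (bg _ _ (fun _ => x) P') => // i; exact: measurable_cst.
Qed.

Lemma Bm_outer d (g : 'rV[R]_d -> 'rV[R]_d -> R) :
  Bm g -> jmR (fun (_ : R) x => rint (g x)).
Proof.
move=> bg.
have J : @jmB ('rV[R]_d -> R) (fun d T h => jmR h) d _ R (fun _ x => g x).
  apply: jm_intro => d' T' s0 X _ mX.
  apply: jm_intro => d'' T'' s1 P' ms1 mP.
  apply: bg => // i; exact: (measurableT_comp (mX i) ms1).
exact: (jmB_map (fun d T h (H : jmR h) => rint_meas H) J).
Qed.

Lemma Bm_outerE d (g : 'rV[R]_d -> 'rV[R]_d -> R) :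
  Bm g -> (forall x p, 0 <= g x p) ->
  jmE (fun (_ : R) x => eint (fun p => (g x p)%:E)).
Proof.
move=> bg g0.
have J : @jmB ('rV[R]_d -> \bar R)
   (fun d T h => jmE h /\ forall s v, (0 <= h s v)%E) d _ R (fun _ x p => (g x p)%:E).
  apply: jm_intro => d' T' s0 X _ mX; split; last by move=> s v; rewrite lee_fin.
  apply: jm_intro => d'' T'' s1 P' ms1 mP.
  apply/measurable_EFinP.
  apply: bg => // i; exact: (measurableT_comp (mX i) ms1).
exact: (jmB_map (fun d T h (H : jmE h /\ _) => eint_meas H.1 H.2) J).
Qed.

Lemma pint_lin d (I : finType) (a : I -> R) (f wt : I -> 'rV[R]_d -> 'rV[R]_d -> R)
  (F : 'rV[R]_d -> 'rV[R]_d -> R) :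
  (forall i, Bm (f i)) -> (forall i, Bm (wt i)) -> Bm F ->
  (forall i x p, `|f i x p| <= wt i x p) ->
  (forall x p, F x p = \sum_i a i * f i x p) ->
  (forall i, (eint (fun x => eint (fun p => (wt i x p)%:E)) < +oo)%E) ->
  pint F = \sum_i a i * pint (f i).
Proof.
move=> bf bw bF fw HF wfin.
have w0 i x p : 0 <= wt i x p by apply: le_trans (fw i x p).
have inner x : (forall i, (eint (fun p => (wt i x p)%:E) < +oo)%E) ->
    rint (F x) = \sum_i a i * rint (f i x).
  move=> Hx.
  apply: (@rint_lin d _ R I a (fun i _ p => f i x p) (fun i _ p => (wt i x p)%:E)
            (fun _ p => F x p)) => //.
  - by move=> i; exact: Bm_inner.
  - by move=> i; exact: Bm_innerE.
  - exact: Bm_inner.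
  - by move=> i s v; rewrite lee_fin.
  - by move=> i s v; rewrite lee_fin.
  all: try exact: (0 : R).
apply: (@rint_lin d _ R I a (fun i _ x => rint (f i x))
          (fun i _ x => eint (fun p => (wt i x p)%:E)) (fun _ x => rint (F x))) => //.
- by move=> i; exact: Bm_outer.
- by move=> i; exact: Bm_outerE.
- exact: Bm_outer.
- by move=> i s v; apply: eint_ge0 => p; rewrite lee_fin.
- move=> i s x.
  apply: (@rint_abs_le d _ R (fun _ p => f i x p) (fun _ p => (wt i x p)%:E)) => //.
  + exact: Bm_inner.
  + exact: Bm_innerE.
  + by move=> s' v; rewrite lee_fin.
  + by move=> s' v; rewrite lee_fin.
all: try (by move=> s x Hx; exact: inner).
all: try exact: (0 : R).
all: try exact: wfin.
Qed.
End J.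
Section M.
Variable R : realType.

Lemma sqn_ge0 d (v : 'rV[R]_d) : 0 <= sqn v.
Proof. by apply: sumr_ge0 => i _; rewrite -expr2 sqr_ge0. Qed.

Lemma coord_le_sqn d (v : 'rV[R]_d) i : `|v 0 i| <= 1 + sqn v.
Proof.
have H1 : v 0 i * v 0 i <= sqn v.
  rewrite /sqn /dotv (bigD1 i) //= lerDl.
  by apply: sumr_ge0 => j _; rewrite -expr2 sqr_ge0.
have H2 : `|v 0 i| <= 1 + v 0 i * v 0 i.
  have [a0|a0] := leP 0 (v 0 i); [rewrite ger0_norm //; nra | rewrite ltr0_norm //; nra].
lra.
Qed.

Lemma dot_le_sqn d (x p : 'rV[R]_d) : `|dotv x p| <= sqn x + sqn p.
Proof.
rewrite /sqn /dotv -big_split /=.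
apply: le_trans (ler_norm_sum _ _ _) _.
apply: ler_sum => i _.
have [a0|a0] := leP 0 (x 0 i); have [b0|b0] := leP 0 (p 0 i).
- rewrite ger0_norm; [nra | exact: mulr_ge0].
- rewrite ler0_norm; [nra | exact: mulr_ge0_le0 (ltW b0)].
- rewrite ler0_norm; [nra | exact: mulr_le0_ge0 (ltW a0) b0].
- rewrite ger0_norm; [nra | exact: mulr_le0 (ltW a0) (ltW b0)].
Qed.
End M.

Section Mom.
Variable R : realType.
Variable d : nat.
Implicit Types f g W : 'rV[R]_d -> 'rV[R]_d -> R.

Lemma Bm_mul f g : Bm f -> Bm g -> Bm (fun x p => f x p * g x p).
Proof. by move=> bf bg d' T X P mX mP; apply: measurable_funM; [exact: bf|exact: bg]. Qed.

Lemma Bm_add f g : Bm f -> Bm g -> Bm (fun x p => f x p + g x p).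
Proof. by move=> bf bg d' T X P mX mP; apply: measurable_funD; [exact: bf|exact: bg]. Qed.

Lemma Bm_sum (I : finType) (f : I -> 'rV[R]_d -> 'rV[R]_d -> R) :
  (forall i, Bm (f i)) -> Bm (fun x p => \sum_i f i x p).
Proof. by move=> bf d' T X P mX mP; apply: measurable_sum => i; exact: bf. Qed.

Lemma Bm_cx i : Bm (fun (x p : 'rV[R]_d) => x 0 i).
Proof. by move=> d' T X P mX mP; exact: mX. Qed.

Lemma Bm_cp i : Bm (fun (x p : 'rV[R]_d) => p 0 i).
Proof. by move=> d' T X P mX mP; exact: mP. Qed.

Lemma Bm_sqn (Y : 'rV[R]_d -> 'rV[R]_d -> 'rV[R]_d) :
  (forall i, Bm (fun x p => Y x p 0 i)) -> Bm (fun x p => sqn (Y x p)).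
Proof.
move=> bY d' T X P mX mP; rewrite /sqn /dotv.
by apply: measurable_sum => i; apply: measurable_funM; exact: bY.
Qed.

Lemma Bm_dot (Y Z : 'rV[R]_d -> 'rV[R]_d -> 'rV[R]_d) :
  (forall i, Bm (fun x p => Y x p 0 i)) -> (forall i, Bm (fun x p => Z x p 0 i)) ->
  Bm (fun x p => dotv (Y x p) (Z x p)).
Proof.
move=> bY bZ d' T X P mX mP; rewrite /dotv.
by apply: measurable_sum => i; apply: measurable_funM; [exact: bY|exact: bZ].
Qed.

Lemma Bm_subc (Y : 'rV[R]_d -> 'rV[R]_d -> 'rV[R]_d) (c : 'rV[R]_d) :
  (forall i, Bm (fun x p => Y x p 0 i)) -> forall i, Bm (fun x p => (Y x p - c) 0 i).
Proof.
move=> bY i d' T X P mX mP.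
have -> : (fun s => (Y (X s) (P s) - c) 0 i) = (fun s => Y (X s) (P s) 0 i - c 0 i).
  by apply/funext => s; rewrite !mxE.
apply: measurable_funB; [exact: bY | exact: measurable_cst].
Qed.

Definition fin2 f := (eint (fun x => eint (fun p => (f x p)%:E)) < +oo)%E.

Lemma pfin_fin2 f : (forall x p, 0 <= f x p) -> pfin f -> fin2 f.
Proof.
move=> f0; rewrite /pfin /fin2.
have -> : (fun x => eint (fun p => (`|f x p|)%:E)) = (fun x => eint (fun p => (f x p)%:E)).
  apply/funext => x; congr eint; apply/funext => p; by rewrite ger0_norm.
by [].
Qed.

Lemma fin2_add f g : Bm f -> Bm g -> (forall x p, 0 <= f x p) -> (forall x p, 0 <= g x p) ->
  fin2 f -> fin2 g -> fin2 (fun x p => f x p + g x p).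
Proof.
move=> bf bg f0 g0 ff fg; rewrite /fin2.
have -> : (fun x => eint (fun p => (f x p + g x p)%:E)) =
   (fun x => eint (fun p => (f x p)%:E) + eint (fun p => (g x p)%:E))%E.
  apply/funext => x.
  have := @eint_add R d _ R (fun _ p => (f x p)%:E) (fun _ p => (g x p)%:E)
     (Bm_innerE x bf) (Bm_innerE x bg) (fun _ _ => f0 _ _) (fun _ _ => g0 _ _) 0.
  by move=> <-.
rewrite (@eint_add R d _ R (fun _ x => eint (fun p => (f x p)%:E))
     (fun _ x => eint (fun p => (g x p)%:E)) (Bm_outerE bf f0) (Bm_outerE bg g0)) //.
- exact: 0.
- exact: lte_add_pinfty.
- by move=> _ v; apply: eint_ge0 => p; rewrite lee_fin.
- by move=> _ v; apply: eint_ge0 => p; rewrite lee_fin.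
Qed.

End Mom.

Section Mom2.
Variable R : realType.
Variable d : nat.
Implicit Types f g W : 'rV[R]_d -> 'rV[R]_d -> R.

Lemma pint_V W (Y : 'rV[R]_d -> 'rV[R]_d -> 'rV[R]_d) (c : 'rV[R]_d) :
  Bm W -> (forall x p, 0 <= W x p) -> pfin W ->
  (forall i, Bm (fun x p => Y x p 0 i)) -> pfin (fun x p => sqn (Y x p) * W x p) ->
  pint (fun x p => sqn (Y x p - c) * W x p) =
  pint (fun x p => sqn (Y x p) * W x p)
  - 2 * \sum_i c 0 i * pint (fun x p => Y x p 0 i * W x p) + sqn c * pint W.
Proof.
move=> bW W0 fW bY fY.
have sW x p : 0 <= sqn (Y x p) * W x p by apply: mulr_ge0 => //; exact: sqn_ge0.
have bsW : Bm (fun x p => sqn (Y x p) * W x p) by apply: Bm_mul => //; exact: Bm_sqn.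
pose I := ('I_d + bool)%type.
pose a : I -> R := fun k => match k with inl i => - 2 * c 0 i | inr true => 1 | inr false => sqn c end.
pose f : I -> 'rV[R]_d -> 'rV[R]_d -> R := fun k x p => match k with
  inl i => Y x p 0 i * W x p | inr true => sqn (Y x p) * W x p | inr false => W x p end.
pose wt : I -> 'rV[R]_d -> 'rV[R]_d -> R := fun k x p => match k with
  inl i => W x p + sqn (Y x p) * W x p | inr true => sqn (Y x p) * W x p | inr false => W x p end.
have := @pint_lin R d I a f wt (fun x p => sqn (Y x p - c) * W x p).
rewrite big_sumType big_bool /= mul1r => ->.
- rewrite [in RHS]mulr_sumr -[in RHS]sumrN.
  rewrite (eq_bigr (fun i => - (2 * (c 0 i * pint (fun x p => Y x p 0 i * W x p))))); last first.
    by move=> i _ /=; ring.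
  rewrite /=; ring.
- case=> [i|[]] /=; [exact: (Bm_mul (bY i) bW) | exact: bsW | exact: bW].
- case=> [i|[]] /=; [exact: (Bm_add bW bsW) | exact: bsW | exact: bW].
- apply: Bm_mul => //; apply: Bm_sqn; exact: Bm_subc.
- case=> [i|[]] x p /=.
  + rewrite normrM (ger0_norm (W0 x p)) -[X in X + _]mul1r -mulrDl.
    by apply: ler_wpM2r => //; exact: coord_le_sqn.
  + by rewrite ger0_norm.
  + by rewrite ger0_norm.
- move=> x p; rewrite big_sumType big_bool /= mul1r.
  rewrite /sqn /dotv !mulr_suml -!big_split /=; apply: eq_bigr => i _; rewrite !mxE; ring.
- case=> [i|[]] /=.
  + by apply: fin2_add => //; exact: pfin_fin2.
  + exact: pfin_fin2.
  + exact: pfin_fin2.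
Qed.

End Mom2.

Section Mom3.
Variable R : realType.
Variable d : nat.
Implicit Types f g W : 'rV[R]_d -> 'rV[R]_d -> R.

Lemma pint_Vxp W (c e : 'rV[R]_d) :
  Bm W -> (forall x p, 0 <= W x p) -> pfin W ->
  pfin (fun x p => sqn x * W x p) -> pfin (fun x p => sqn p * W x p) ->
  pint (fun x p => dotv (x - c) (p - e) * W x p) =
  pint (fun x p => dotv x p * W x p)
  - \sum_i e 0 i * pint (fun x p => x 0 i * W x p)
  - \sum_i c 0 i * pint (fun x p => p 0 i * W x p) + dotv c e * pint W.
Proof.
move=> bW W0 fW fX fP.
have sX x p : 0 <= sqn x * W x p by apply: mulr_ge0 => //; exact: sqn_ge0.
have sP x p : 0 <= sqn p * W x p by apply: mulr_ge0 => //; exact: sqn_ge0.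
have bX : Bm (fun x p : 'rV[R]_d => sqn x * W x p).
  by apply: Bm_mul => //; exact: (@Bm_sqn R d (fun x p => x) (@Bm_cx R d)).
have bP : Bm (fun x p : 'rV[R]_d => sqn p * W x p).
  by apply: Bm_mul => //; exact: (@Bm_sqn R d (fun x p => p) (@Bm_cp R d)).
pose I := (('I_d + 'I_d) + bool)%type.
pose a : I -> R := fun k => match k with
  | inl (inl i) => - e 0 i | inl (inr i) => - c 0 i | inr true => 1 | inr false => dotv c e end.
pose f : I -> 'rV[R]_d -> 'rV[R]_d -> R := fun k x p => match k with
  | inl (inl i) => x 0 i * W x p | inl (inr i) => p 0 i * W x p
  | inr true => dotv x p * W x p | inr false => W x p end.
pose wt : I -> 'rV[R]_d -> 'rV[R]_d -> R := fun k x p => match k with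
  | inl (inl i) => W x p + sqn x * W x p | inl (inr i) => W x p + sqn p * W x p
  | inr true => sqn x * W x p + sqn p * W x p | inr false => W x p end.
have E1 : \sum_i a (inl (inl i)) * pint (f (inl (inl i))) =
          - \sum_i e 0 i * pint (fun x p => x 0 i * W x p).
  by rewrite -sumrN; apply: eq_bigr => i _ /=; rewrite mulNr.
have E2 : \sum_i a (inl (inr i)) * pint (f (inl (inr i))) =
          - \sum_i c 0 i * pint (fun x p => p 0 i * W x p).
  by rewrite -sumrN; apply: eq_bigr => i _ /=; rewrite mulNr.
have := @pint_lin R d I a f wt (fun x p => dotv (x - c) (p - e) * W x p).
rewrite big_sumType big_sumType big_bool E1 E2 => ->.
- rewrite /=; ring.
- case=> [[i|i]|[]] /=.
  + exact: (Bm_mul (@Bm_cx R d i) bW).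
  + exact: (Bm_mul (@Bm_cp R d i) bW).
  + exact: (Bm_mul (@Bm_dot R d (fun x p => x) (fun x p => p) (@Bm_cx R d) (@Bm_cp R d)) bW).
  + exact: bW.
- case=> [[i|i]|[]] /=.
  + exact: (Bm_add bW bX).
  + exact: (Bm_add bW bP).
  + exact: (Bm_add bX bP).
  + exact: bW.
- apply: Bm_mul => //; apply: (@Bm_dot R d (fun x p => x - c) (fun x p => p - e)).
  + exact: (@Bm_subc R d (fun x p => x) c (@Bm_cx R d)).
  + exact: (@Bm_subc R d (fun x p => p) e (@Bm_cp R d)).
- case=> [[i|i]|[]] x p /=.
  + rewrite normrM (ger0_norm (W0 x p)) -[X in X + _]mul1r -mulrDl.
    by apply: ler_wpM2r => //; exact: coord_le_sqn.
  + rewrite normrM (ger0_norm (W0 x p)) -[X in X + _]mul1r -mulrDl.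
    by apply: ler_wpM2r => //; exact: coord_le_sqn.
  + rewrite normrM (ger0_norm (W0 x p)) -mulrDl.
    by apply: ler_wpM2r => //; exact: dot_le_sqn.
  + by rewrite ger0_norm.
- move=> x p; rewrite big_sumType big_sumType big_bool /= mul1r.
  rewrite /dotv !mulr_suml -!big_split /=; apply: eq_bigr => i _; rewrite !mxE; ring.
- case=> [[i|i]|[]] /=.
  + by apply: fin2_add => //; exact: pfin_fin2.
  + by apply: fin2_add => //; exact: pfin_fin2.
  + by apply: fin2_add => //; exact: pfin_fin2.
  + exact: pfin_fin2.
Qed.

End Mom3.
Section O.
Variable R : realType.

Lemma poly_is_derive (a0 a1 a2 a3 x : R) :
  is_derive x 1 (fun z : R => a0 + a1 * z + a2 * z ^+ 2 + a3 * z ^+ 3)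
    (a1 + 2 * a2 * x + 3 * a3 * x ^+ 2).
Proof.
pose p : {poly R} := a0%:P + a1%:P * 'X + a2%:P * 'X^2 + a3%:P * 'X^3.
have -> : (fun z : R => a0 + a1 * z + a2 * z ^+ 2 + a3 * z ^+ 3) = horner p.
  by apply/funext => z; rewrite /p !hornerE.
apply: (is_derive_eq (is_derive_poly p x)).
rewrite /p !poly.derivE !hornerE /=; ring.
Qed.
End O.

Section O2.
Variable R : realType.

Lemma ode_subpoly (zs : \bar R) f f' (a0 a1 a2 a3 : R) : ode_law zs f f' ->
  ode_law zs (fun z => f z - (a0 + a1 * z + a2 * z ^+ 2 + a3 * z ^+ 3))
             (fun z => f' z - (a1 + 2 * a2 * z + 3 * a3 * z ^+ 2)).
Proof.
move=> [cf df]; split.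
  have cP : continuous (fun z : R => a0 + a1 * z + a2 * z ^+ 2 + a3 * z ^+ 3).
    move=> x; apply: differentiable_continuous; apply/derivable1_diffP.
    by case: (poly_is_derive a0 a1 a2 a3 x).
  move=> x.
  exact: (@continuousB _ _ (subspace (exist_itv zs)) f _ x (cf x) (@continuous_subspaceT _ _ (exist_itv zs) _ cP x)).
move=> z z0 zs'.
exact: (is_deriveB (df z z0 zs') (poly_is_derive a0 a1 a2 a3 z)).
Qed.

Lemma ode_mono (zs : \bar R) f f' : ode_law zs f f' ->
  (forall z, 0 < z -> (z%:E < zs)%E -> f' z <= 0) ->
  forall z, exist_itv zs z -> f z <= f 0.
Proof.
move=> [cf df] Hneg z [z0 zs'].
move: z0; rewrite le_eqVlt => /orP[/eqP <-|zpos]; first by [].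
have sub : [set` `[0, z]] `<=` exist_itv zs.
  move=> y /=; rewrite in_itv /= => /andP[y0 yz]; split => //.
  by apply: le_lt_trans zs'; rewrite lee_fin.
have dfi : forall x, x \in `]0, z[ -> is_derive x 1 f (f' x).
  move=> x; rewrite in_itv /= => /andP[x0 xz]; apply: df => //.
  by apply: lt_trans zs'; rewrite lte_fin.
have [c Hc E] := MVT zpos dfi (continuous_subspaceW sub cf).
rewrite -subr_le0 E subr0.
move: Hc; rewrite in_itv /= => /andP[c0 cz].
apply: mulr_le0_ge0; last exact: ltW.
apply: Hneg => //.
by apply: lt_trans zs'; rewrite lte_fin.
Qed.

End O2.

Section Aux.
Variable R : realType.

Lemma rint_ge0 n : forall (f : 'rV[R]_n -> R), (forall v, 0 <= f v) -> 0 <= rint f.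
Proof.
elim: n => [|n IH] f f0 /=; first exact: f0.
rewrite /Rintegral; apply: fine_ge0; apply: integral_ge0 => t _.
by rewrite lee_fin; apply: IH => v; exact: f0.
Qed.

Lemma Rc_ge0 d (L : scattering) (Phi : R -> 'rV[R]_d -> R) :
  power_spectrum Phi -> 0 <= Rconst L Phi.
Proof.
case=> _ Phi0 _ _; rewrite /Rconst; case: L.
  apply: mulr_ge0; first by apply: mulr_ge0 => //; exact: pi_ge0.
  apply: rint_ge0 => q; apply: mulr_ge0 => //; exact: sqn_ge0.
apply: mulr_ge0 => //; rewrite /mxtrace; apply: sumr_ge0 => i _; rewrite mxE.
apply: mulr_ge0; first exact: pi_ge0.
apply: rint_ge0 => q; rewrite -mulrA; apply: mulr_ge0 => //; by rewrite -expr2 sqr_ge0.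
Qed.

Lemma ode_opp (zs : \bar R) f f' : ode_law zs f f' ->
  ode_law zs (fun z => - f z) (fun z => - f' z).
Proof.
move=> [cf df]; split.
  move=> x; exact: (@continuousN _ _ (subspace (exist_itv zs)) f x (cf x)).
move=> z z0 zs'; exact: (is_deriveN (df z z0 zs')).
Qed.

Lemma ode_const (zs : \bar R) f f' : ode_law zs f f' ->
  (forall z, 0 < z -> (z%:E < zs)%E -> f' z = 0) ->
  forall z, exist_itv zs z -> f z = f 0.
Proof.
move=> O H z hz; apply/eqP; rewrite eq_le; apply/andP; split.
  by apply: (ode_mono O _ hz) => y y0 ys; rewrite H.
have := ode_mono (ode_opp O) _ hz; rewrite lerN2; apply.
by move=> y y0 ys; rewrite H // oppr0.
Qed.

Lemma sqn_lin d (a u v : 'rV[R]_d) (z : R) : (forall i, a 0 i = u 0 i + z * v 0 i) ->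
  sqn a = sqn u + 2 * z * dotv u v + z ^+ 2 * sqn v.
Proof.
move=> Ha; rewrite /sqn /dotv !mulr_sumr -!big_split /=.
by apply: eq_bigr => i _; rewrite Ha; ring.
Qed.

Lemma dot_lin d (a u v : 'rV[R]_d) (z : R) : (forall i, a 0 i = u 0 i + z * v 0 i) ->
  dotv a v = dotv u v + z * sqn v.
Proof.
move=> Ha; rewrite /sqn /dotv !mulr_sumr -!big_split /=.
by apply: eq_bigr => i _; rewrite Ha; ring.
Qed.

Variable d : nat.
Variable W : R -> 'rV[R]_d -> 'rV[R]_d -> R.
Variable z : R.
Hypothesis bW : borel_fun (fun xp : 'rV[R]_d * 'rV[R]_d => W z xp.1 xp.2).
Hypothesis W0 : forall x p, 0 <= W z x p.
Hypothesis fW : pfin (W z).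
Hypothesis pW : pint (W z) = 1.
Hypothesis fX : pfin (fun x p => sqn x * W z x p).
Hypothesis fP : pfin (fun x p => sqn p * W z x p).

Lemma Vx_rel : Vx W z = mom_xx W z - sqn (xbar W z).
Proof.
have E := @pint_V R d (W z) (fun x p => x) (xbar W z) (borel_Bm bW) W0 fW (@Bm_cx R d) fX.
cbv beta in E; rewrite /Vx E pW.
have -> : \sum_i xbar W z 0 i * pint (fun x p => x 0 i * W z x p) = sqn (xbar W z).
  by apply: eq_bigr => i _; congr (_ * _); rewrite /xbar mxE.
rewrite /mom_xx; ring.
Qed.

Lemma Vp_rel : Vp W z = mom_pp W z - sqn (pbar W z).
Proof.
have E := @pint_V R d (W z) (fun x p => p) (pbar W z) (borel_Bm bW) W0 fW (@Bm_cp R d) fP.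
cbv beta in E; rewrite /Vp E pW.
have -> : \sum_i pbar W z 0 i * pint (fun x p => p 0 i * W z x p) = sqn (pbar W z).
  by apply: eq_bigr => i _; congr (_ * _); rewrite /pbar mxE.
rewrite /mom_pp; ring.
Qed.

Lemma Vxp_rel : Vxp W z = mom_xp W z - dotv (xbar W z) (pbar W z).
Proof.
have E := @pint_Vxp R d (W z) (xbar W z) (pbar W z) (borel_Bm bW) W0 fW fX fP.
rewrite /Vxp E pW.
have -> : \sum_i pbar W z 0 i * pint (fun x p => x 0 i * W z x p) = dotv (xbar W z) (pbar W z).
  by apply: eq_bigr => i _; rewrite mulrC; congr (_ * _); rewrite /xbar mxE.
have -> : \sum_i xbar W z 0 i * pint (fun x p => p 0 i * W z x p) = dotv (xbar W z) (pbar W z).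
  by apply: eq_bigr => i _; congr (_ * _); rewrite /pbar mxE.
rewrite /mom_xp; ring.
Qed.

End Aux.

Theorem proposition3 (R : realType) (d : nat) (sigma g : R) (L : scattering)
    (Phi : R -> 'rV[R]_d -> R)
    (W : R -> 'rV[R]_d -> 'rV[R]_d -> R) (zs : \bar R) :
  (1 <= d)%N -> 0 < sigma -> 2 <= d%:R * sigma -> 0 < g ->
  power_spectrum Phi ->
  standing_assumptions sigma g (Rconst L Phi) W zs ->
  let Rc := Rconst L Phi in
  let H0 := Ham sigma g W 0 in
  let Hb := Hbar W 0 in
  let F := fun z : R => Vx W 0 + 2 * Vxp W 0 * z + d%:R * sigma * (H0 - Hb) * z ^+ 2
                        + d%:R * sigma * Rc / 3 * z ^+ 3 in
  let z0 := (Hb - H0 + Num.sqrt ((H0 - Hb) ^+ 2 - 2 * Rc * Vxp W 0 / (d%:R * sigma))) / Rc in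
  F z0 <= 0 ->
  (Vxp W 0 < 0 \/
   (0 < Vxp W 0 /\ H0 < Hb - Num.sqrt (2 * Rc * Vxp W 0 / (d%:R * sigma)))) ->
  (zs <= z0%:E)%E.
Proof.
move=> hd hs hds hg hPhi [zs0 [Hpt [Hmx Hmp Hxx Hxp Hham]]] Rc H0 Hb F z0 HF Hcase.
have Rc0 : 0 <= Rc by exact: Rc_ge0.
have ds0 : 0 < d%:R * sigma by apply: lt_le_trans hds.
have z00 : 0 <= z0.
  rewrite /z0; have [->|Rcn0] := eqVneq Rc 0; first by rewrite invr0 mulr0.
  apply: divr_ge0 => //.
  case: Hcase => [Hn|[Hp Hlt]].
    have Hq : 2 * Rc * Vxp W 0 / (d%:R * sigma) <= 0.
      apply: mulr_le0_ge0; last by rewrite invr_ge0 ltW.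
      by apply: mulr_ge0_le0; [apply: mulr_ge0 | exact: ltW].
    have := sqr_ge0 (H0 - Hb).
    have : `|H0 - Hb| <= Num.sqrt ((H0 - Hb) ^+ 2 - 2 * Rc * Vxp W 0 / (d%:R * sigma)).
      rewrite -sqrtr_sqr ler_sqrt; first lra.
      have := sqr_ge0 (H0 - Hb); lra.
    have := ler_norm (H0 - Hb); have := ler_norm (Hb - H0); rewrite distrC; lra.
  have := sqrtr_ge0 ((H0 - Hb) ^+ 2 - 2 * Rc * Vxp W 0 / (d%:R * sigma)).
  have := sqrtr_ge0 (2 * Rc * Vxp W 0 / (d%:R * sigma)).
  lra.
rewrite leNgt; apply/negP => Hz0.
have hz0 : exist_itv zs z0 by [].
have h0 : exist_itv zs 0 by split.
have facts z : exist_itv zs z -> [/\ Vx W z = mom_xx W z - sqn (xbar W z),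
    Vxp W z = mom_xp W z - dotv (xbar W z) (pbar W z),
    Vp W z = mom_pp W z - sqn (pbar W z), 0 < Vx W z & 0 < Vp W z].
  move=> hz; have [[bW W0] [[fW pW] _] [fX fP Vx0 Vp0] _ _] := Hpt z hz.
  by split => //; [exact: Vx_rel | exact: Vxp_rel | exact: Vp_rel].
have itvP z : 0 < z -> (z%:E < zs)%E -> exist_itv zs z by move=> z0' zs'; split => //; exact: ltW.
have Pc z i : exist_itv zs z -> mom_p W z i = mom_p W 0 i.
  by move=> hz; apply: (ode_const (Hmp i)).
have Xl z i : exist_itv zs z -> mom_x W z i = mom_x W 0 i + z * mom_p W 0 i.
  move=> hz.
  have O := ode_subpoly (mom_x W 0 i) (mom_p W 0 i) 0 0 (Hmx i).
  have Hd : forall y, 0 < y -> (y%:E < zs)%E ->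
      mom_p W y i - (mom_p W 0 i + 2 * 0 * y + 3 * 0 * y ^+ 2) = 0.
    by move=> y y0 ys; rewrite Pc; [ring | exact: itvP].
  have E := ode_const O Hd hz; rewrite /= in E.
  rewrite mulrC; move: E; rewrite !mul0r !mulr0 !addr0 subrr; lra.
have Hl z : exist_itv zs z -> Ham sigma g W z = H0 + Rc / 2 * z.
  move=> hz.
  have O := ode_subpoly H0 (Rc / 2) 0 0 Hham.
  have Hd : forall y, 0 < y -> (y%:E < zs)%E ->
      Rc / 2 - (Rc / 2 + 2 * 0 * y + 3 * 0 * y ^+ 2) = 0.
    by move=> y y0 ys; ring.
  have E := ode_const O Hd hz; rewrite /= in E.
  move: E; rewrite !mul0r !mulr0 !addr0 -/H0 subrr; lra.
pose X0 := xbar W 0; pose P0 := pbar W 0.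
have pbarE z : exist_itv zs z -> pbar W z = P0.
  by move=> hz; apply/rowP => i; rewrite /P0 /pbar !mxE; exact: Pc.
have xbarE z i : exist_itv zs z -> xbar W z 0 i = X0 0 i + z * P0 0 i.
  by move=> hz; rewrite /X0 /P0 /xbar /pbar !mxE; exact: Xl.
pose c0 := sqn X0; pose c1 := dotv X0 P0; pose S := sqn P0.
have [Vx0E Vxp0E _ _ _] := facts 0 h0.
have HbE : Hb = 2^-1 * S by [].
have kle z : exist_itv zs z -> mom_xp W z - (c1 + Vxp W 0 + (S + (d%:R * sigma) * (H0 - Hb)) * z
     + (d%:R * sigma) * Rc / 4 * z ^+ 2 + 0 * z ^+ 3) <= 0.
  move=> hz.
  have O := ode_subpoly (c1 + Vxp W 0) (S + (d%:R * sigma) * (H0 - Hb)) ((d%:R * sigma) * Rc / 4) 0 Hxp.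
  have Hd : forall y, 0 < y -> (y%:E < zs)%E ->
     (mom_pp W y - g * (d%:R * sigma) / (sigma + 1) * potint sigma W y)
       - ((S + (d%:R * sigma) * (H0 - Hb)) + 2 * ((d%:R * sigma) * Rc / 4) * y + 3 * 0 * y ^+ 2) <= 0.
    move=> y y0 ys; have hy := itvP y y0 ys.
    have [_ _ VpE _ Vp0] := facts y hy.
    have Hy := Hl y hy.
    rewrite (pbarE y hy) in VpE.
    rewrite /Ham in Hy.
    have E1 : g / (sigma + 1) * potint sigma W y = 2^-1 * mom_pp W y - (H0 + Rc / 2 * y).
      by rewrite -Hy /mom_pp; ring.
    have -> : g * (d%:R * sigma) / (sigma + 1) * potint sigma W y = (d%:R * sigma) * (g / (sigma + 1) * potint sigma W y).
      by ring.
    rewrite E1 HbE.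
    have h1 : 0 <= (d%:R * sigma) - 2 by lra.
    have h2 : 0 <= mom_pp W y - S by rewrite -/S in VpE; lra.
    have := mulr_ge0 h1 h2.
    nra.
  have E := ode_mono O Hd hz; rewrite /= in E.
  move: E; rewrite Vxp0E -[dotv (xbar W 0) (pbar W 0)]/c1 !mulr0 !mul0r !addr0; lra.
have e2 : (0:R) ^+ 2 = 0 by rewrite expr2 mulr0.
have e3 : (0:R) ^+ 3 = 0 by rewrite !exprS !mul0r.
have hle z : exist_itv zs z -> mom_xx W z - (c0 + Vx W 0 + (2 * c1 + 2 * Vxp W 0) * z
     + (S + (d%:R * sigma) * (H0 - Hb)) * z ^+ 2 + (d%:R * sigma) * Rc / 6 * z ^+ 3) <= 0.
  move=> hz.
  have O := ode_subpoly (c0 + Vx W 0) (2 * c1 + 2 * Vxp W 0) (S + (d%:R * sigma) * (H0 - Hb)) ((d%:R * sigma) * Rc / 6) Hxx.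
  have Hd : forall y, 0 < y -> (y%:E < zs)%E ->
     2 * mom_xp W y - ((2 * c1 + 2 * Vxp W 0) + 2 * (S + (d%:R * sigma) * (H0 - Hb)) * y
        + 3 * ((d%:R * sigma) * Rc / 6) * y ^+ 2) <= 0.
    by move=> y y0 ys; have := kle y (itvP y y0 ys); lra.
  have E := ode_mono O Hd hz; rewrite /= in E.
  move: E; rewrite Vx0E -[sqn (xbar W 0)]/c0 e2 e3 !mulr0 !addr0; lra.
have [VxE _ _ Vxpos _] := facts z0 hz0.
have sqE : sqn (xbar W z0) = c0 + 2 * z0 * c1 + z0 ^+ 2 * S.
  by apply: sqn_lin => i; exact: xbarE.
have H1 := hle z0 hz0.
have cub : 0 <= (d%:R * sigma) * Rc * z0 ^+ 3.
  by apply: mulr_ge0; [apply: mulr_ge0 => //; exact: ltW | exact: exprn_ge0].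
have HF' : Vx W 0 + 2 * Vxp W 0 * z0 + (d%:R * sigma) * (H0 - Hb) * z0 ^+ 2
             + (d%:R * sigma) * Rc / 3 * z0 ^+ 3 <= 0 := HF.
rewrite VxE sqE in Vxpos.
lra.
Qed.
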